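(* Let $X$ be an irreducible positive recurrent Markov chain on a countable state space $S$ with transition matrix $P$ and stationary distribution $\pi$. Let $K=\{z\}$ and let $A\supseteq K$ be a finite subset of $S$, $A'=A\setminus K$, $T_K=\inf\{n\ge1:X_n=z\}$, $T=\inf\{n\ge1:X_n\notin A\}$. Let $r:S\to[0,\infty)$ and suppose there are non-negative functions $g_1,g_2$ on $K^c$ and $h_1,h_2$ on $A$ such that for all $x\in K^c$ $$\sum_{y\in K^c}P(x,y)g_1(y)\le g_1(x)-r(x),\qquad \sum_{y\in K^c}P(x,y)g_2(y)\le g_2(x)-1,$$ and for all $x\in A$ and $i=1,2$, $\sum_{y\in A^c}P(x,y)g_i(y)\le h_i(x)$. Write $h_i=(h_{i1},h_{i2})$ for the restrictions to $K$ and $A'$ and set $\beta_i(z)=h_{i1}(z)+(P_{12}(I-P_{22})^{-1}h_{i2})(z)$. For non-negative $f$ let $\underline\kappa(z,f)=E_z\sum_{j=0}^{(T\wedge T_K)-1}f(X_j)$ and $\tilde\pi(f)=\underline\kappa(z,f)/\underline\kappa(z,e)$ with $e\equiv 1$, and let $\pi^*$ be the probability on $S$ given by $\pi^*(x)=\tilde\pi(e_x)$, where $e_x$ is the indicator of $\{x\}$. Then $$\|\pi^*-\pi\|_r\le 2\max\left(\frac{\beta_1(z)}{\underline\kappa(z,e)},\ \tilde\pi(r)\cdot\frac{\beta_2(z)}{\underline\kappa(z,e)}\right).$$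
   Context: $E_z$ is expectation for the chain started at $z$. $P$ is written in block form with respect to $(K,A',A^c)$; $P_{12}$ is the $K\times A'$ block and $P_{22}$ the $A'\times A'$ block (with $I-P_{22}$ invertible). The $r$-weighted total variation distance is $\|\mu-\pi\|_r=\sup_{|f|\le r}\left|\sum_{x\in S}\mu(x)f(x)-\sum_{x\in S}\pi(x)f(x)\right|$. When $K$ is a singleton, both the Perron–Frobenius and row-normalized approximations of the paper reduce to $\pi^*$. *)

(* Defs.v *)
From HB Require Import structures.
From mathcomp Require Import all_boot all_order all_algebra.
From mathcomp Require Import all_classical all_reals all_analysis.
Set Implicit Arguments. Unset Strict Implicit. Unset Printing Implicit Defensive.
Import Order.TTheory GRing.Theory Num.Theory.
Local Open Scope classical_set_scope.
Local Open Scope ring_scope.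

Section MarkovDefs.
Variables (R : realType) (S : countType).
Implicit Types (P : S -> S -> R).

Definition stochastic P : Prop :=
  (forall x y, 0 <= P x y) /\
  (forall x, (\esum_(y in [set: S]) (P x y)%:E = 1%E)).

Definition irreducible P : Prop :=
  forall x y : S, exists s : seq S,
    path (fun a b => 0 < P a b) x s && (last x s == y).

(* taboo probabilities u_n(y) = P_x(X_1 <> x, ..., X_n <> x, X_n = y) for
   n >= 1, and u_0 = delta_x *)
Fixpoint taboo P (x : S) (n : nat) (y : S) : \bar R :=
  match n with
  | 0 => (y == x)%:R%:E
  | n.+1 => if y == x then 0%E
            else \esum_(w in [set: S]) (taboo P x n w * (P w y)%:E)%E
  end.

(* E_x T_x = sum_{n >= 0} P_x(T_x > n), T_x = inf {n >= 1 : X_n = x} *)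
Definition mean_return_time P (x : S) : \bar R :=
  (\sum_(n <oo) \esum_(y in [set: S]) taboo P x n y)%E.

Definition positive_recurrent P : Prop :=
  forall x, (mean_return_time P x < +oo)%E.

Definition stationary P (pi : S -> R) : Prop :=
  (forall x, 0 <= pi x) /\
  (\esum_(x in [set: S]) (pi x)%:E = 1%E) /\
  (forall y, (pi y)%:E = \esum_(x in [set: S]) (pi x * P x y)%:E).

Definition ssum (a : S -> R) : \bar R :=
  (\esum_(x in [set: S]) (Num.max (a x) 0)%:E
   - \esum_(x in [set: S]) (Num.max (- a x) 0)%:E)%E.

Definition rnorm (mu nu r : S -> R) : \bar R :=
  ereal_sup [set `| (ssum (fun x => (mu x * f x)%R) - ssum (fun x => (nu x * f x)%R))%E |%E
            | f in [set f : S -> R | forall x, `|f x| <= r x]].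

Definition Aprime (A : seq S) (z : S) : seq S := seq.filter (predC1 z) A.

(* killed distribution: killed j y = P_z(X_j = y, X_1, ..., X_j in A'),
   i.e. P_z(X_j = y, j < T /\ T_K) ; supported in A *)
Fixpoint killed P (A : seq S) (z : S) (j : nat) (y : S) : R :=
  match j with
  | 0 => (y == z)%:R
  | j.+1 => (y \in Aprime A z)%:R *
            \sum_(x <- A) killed P A z j x * P x y
  end.

(* kappa_(z, f) = E_z sum_{j=0}^{(T /\ T_K) - 1} f(X_j)
               = sum_{j >= 0} E_z [ f(X_j) ; j < T /\ T_K ] *)
Definition kappa P (A : seq S) (z : S) (f : S -> R) : \bar R :=
  (\sum_(j <oo) (\sum_(x <- A) killed P A z j x * f x)%:E)%E.

Definition pitilde P A z (f : S -> R) : R :=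
  fine (kappa P A z f) / fine (kappa P A z (fun _ => 1)).

Definition pistar P A z (x : S) : R :=
  pitilde P A z (fun y => (y == x)%:R).

(* block matrices w.r.t. (K, A', A^c) ; A' enumerated by the list Aprime A z *)
Definition P22 P A z : 'M[R]_(size (Aprime A z)) :=
  \matrix_(i, j) P (nth z (Aprime A z) i) (nth z (Aprime A z) j).
Definition P12 P A z : 'rV[R]_(size (Aprime A z)) :=
  \row_j P z (nth z (Aprime A z) j).
Definition restrA' A z (h : S -> R) : 'cV[R]_(size (Aprime A z)) :=
  \col_i h (nth z (Aprime A z) i).

Definition beta P A z (h : S -> R) : R :=
  h z + (P12 P A z *m invmx (1%:M - P22 P A z) *m restrA' A z h) 0 0.

End MarkovDefs.

(* Main.v *)
Require Import Defs.
From HB Require Import structures.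
From mathcomp Require Import all_boot all_order all_algebra.
From mathcomp Require Import all_classical all_reals all_analysis.
From mathcomp Require Import ring lra.
Import Order.TTheory GRing.Theory Num.Theory.
Local Open Scope classical_set_scope.
Local Open Scope ring_scope.
Set Implicit Arguments. Unset Strict Implicit. Unset Printing Implicit Defensive.

Section esum_extra.
Context {R : realType} {T : choiceType}.
Local Open Scope ereal_scope.

Lemma esumZr_fin (I : set T) (a : T -> \bar R) (c : R) : (0 <= c)%R ->
  (forall i, I i -> 0 <= a i) ->
  \esum_(i in I) (c%:E * a i) = c%:E * \esum_(i in I) a i.
Proof.
move=> c0 a0; rewrite /esum -ereal_supZl//; last first.
  by apply/set0P; exists 0; exists set0; [exact: fsets_set0| rewrite fsbig_set0].
have H F : fsets I F -> \sum_(i \in F) (c%:E * a i) = c%:E * \sum_(i \in F) a i.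
  case=> finF FI; rewrite !fsbig_finite//= big_seq [in RHS]big_seq.
  rewrite ge0_sume_distrr// => i; rewrite in_fset_set// inE => /FI /a0 //.
congr ereal_sup; apply/seteqP; split => x /=.
  move=> [F FI <-]; exists (\sum_(i \in F) a i); first by exists F.
  by rewrite H.
by move=> [y [F FI <-] <-]; exists F => //; rewrite H.
Qed.

Lemma esum_ge1 (I : set T) (a : T -> \bar R) i : I i ->
  (forall j, I j -> 0 <= a j) -> a i <= \esum_(j in I) a j.
Proof.
move=> Ii a0; apply: esum_ge; exists [set i]; last by rewrite fsbig_set1.
by split; [exact: finite_set1| move=> j ->].
Qed.

Lemma esumZl (I : set T) (a : T -> \bar R) (c : \bar R) : 0 <= c ->
  (forall i, I i -> 0 <= a i) ->
  \esum_(i in I) (c * a i) = c * \esum_(i in I) a i.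
Proof.
case: c => [c| |] c0 a0.
- exact: esumZr_fin.
- have [[i Ii ai]|] := pselect (exists2 i, I i & 0 < a i).
    have H1 : +oo <= \esum_(j in I) (+oo * a j).
      apply: (le_trans _ (esum_ge1 (a := fun j => +oo * a j) Ii _)); first by rewrite gt0_mulye.
      by move=> j Ij; rewrite mule_ge0// a0.
    have H2 : 0 < \esum_(j in I) a j by rewrite (lt_le_trans ai)// esum_ge1.
    by rewrite gt0_mulye//; apply/eqP; rewrite eq_le leey.
  move=> H.
  have a00 j : I j -> a j = 0.
    move=> Ij; apply/eqP; rewrite eq_le a0// andbT leNgt; apply/negP => aj.
    by apply: H; exists j.
  rewrite esum1 ?mule0//; last by move=> j /a00 ->; rewrite mule0.
  by rewrite esum1 ?mule0.
- by move: c0; rewrite leNgt ltNy0.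
Qed.

Lemma esumZr (I : set T) (a : T -> \bar R) (c : \bar R) : 0 <= c ->
  (forall i, I i -> 0 <= a i) ->
  \esum_(i in I) (a i * c)%E = (\esum_(i in I) a i) * c.
Proof.
by move=> c0 a0; rewrite muleC -esumZl//; apply: eq_esum => i _; rewrite muleC.
Qed.


Lemma esum_seqsupp (s : seq T) (a : T -> \bar R) : uniq s ->
  (forall x, x \notin s -> a x = 0) -> (forall x, 0 <= a x) ->
  \esum_(x in [set: T]) a x = \sum_(x <- s) a x.
Proof.
move=> us sA a0; rewrite (esumID [set` s])// [X in _ + X]esum1 ?adde0; last first.
  move=> x [_ /=] xs; apply: sA; apply/negP => xs'; exact: xs.
rewrite setTI esum_fset//.

by rewrite -fsbig_seq.
Qed.

End esum_extra.

Lemma esum_swap {R : realType} {T1 T2 : choiceType} (I : set T1) (J : set T2)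
  (a : T1 -> T2 -> \bar R) : (forall i j, I i -> J j -> (0 <= a i j)%E) ->
  \esum_(i in I) \esum_(j in J) a i j = \esum_(j in J) \esum_(i in I) a i j.
Proof.
move=> a0; rewrite (esum_esum (J := fun=> J))// (esum_esum (J := fun=> I)); last first.
  by move=> j i Jj Ii; exact: a0.
rewrite (reindex_esum (J `*`` (fun=> I)) _ (fun x => (x.2, x.1)))//; split=> //=.
- by move=> [i j] [/=].
- by move=> [i1 i2] [j1 j2] /= _ _ [] -> ->.
- by move=> [i1 i2] [Pi1 Qi2] /=; exists (i2, i1).
Qed.

Lemma in_setb (T : Type) (p : pred T) y : (y \in [set x | p x]) = p y.
Proof. by apply/idP/idP => [/set_mem|/mem_set]. Qed.

Lemma nneseries_le_bound {R : realType} (u : nat -> \bar R) (M : \bar R) :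
  (forall n, (0 <= u n)%E) -> (forall N, (\sum_(0 <= n < N) u n <= M)%E) ->
  (\sum_(n <oo) u n <= M)%E.
Proof.
move=> u0 uM; apply: lime_le; first exact: is_cvg_nneseries.
by apply: nearW => N; exact: uM.
Qed.

Lemma nneseries_le_partial {R : realType} (u v : nat -> \bar R) :
  (forall n, (0 <= u n)%E) -> (forall n, (0 <= v n)%E) ->
  (forall N, (\sum_(0 <= n < N) u n <= \sum_(0 <= n < N) v n)%E) ->
  (\sum_(n <oo) u n <= \sum_(n <oo) v n)%E.
Proof.
move=> u0 v0 uv; apply: nneseries_le_bound => // N.
by apply: (le_trans (uv N)); apply: nneseries_lim_ge.
Qed.

Lemma final_ineq (R : realFieldType) (a De B1 B2 Lp Lm Lr Dp Dm : R) :
  0 < a -> 0 <= De -> De <= B2 -> 0 <= Lp -> 0 <= Lm -> Lp + Lm <= Lr ->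
  0 <= Dp -> 0 <= Dm -> Dp + Dm <= B1 ->
  `|(Lp / a - Lm / a) - ((a + De)^-1 * (Lp + Dp) - (a + De)^-1 * (Lm + Dm))|
    <= 2 * Num.max (B1 / a) (Lr / a * (B2 / a)).
Proof.
move=> a0 De0 DeB Lp0 Lm0 LL Dp0 Dm0 DD.
set bb := a + De.
have bb0 : 0 < bb by rewrite /bb ltr_wpDr.
have abb : a <= bb by rewrite /bb lerDl.
have DeE : De = bb - a by rewrite /bb; lra.
clearbody bb.
have EX : (Lp / a - Lm / a) - (bb^-1 * (Lp + Dp) - bb^-1 * (Lm + Dm)) =
   (Lp - Lm) * (De / (a * bb)) - (Dp - Dm) / bb.
  have ha : a != 0 by rewrite gt_eqF.
  have hb : bb != 0 by rewrite gt_eqF.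
  rewrite DeE; by field; rewrite ha hb.
rewrite EX.
have u1 : `|Lp - Lm| <= Lr by rewrite ler_norml; apply/andP; split; lra.
have v1 : `|Dp - Dm| <= B1 by rewrite ler_norml; apply/andP; split; lra.
have f1 : De / (a * bb) <= B2 / (a * a).
  apply: (le_trans (y := De / (a * a))).
    by rewrite ler_wpM2l// lef_pV2 ?posrE ?mulr_gt0// ler_pM2l.
  by rewrite ler_wpM2r// invr_ge0 mulr_ge0// ltW.
have f1' : 0 <= De / (a * bb) by rewrite divr_ge0// mulr_ge0// ltW.
have f2 : bb^-1 <= a^-1 by rewrite lef_pV2 ?posrE.
have T1 : `|(Lp - Lm) * (De / (a * bb))| <= Lr / a * (B2 / a).
  rewrite normrM (ger0_norm f1').
  have -> : Lr / a * (B2 / a) = Lr * (B2 / (a * a)).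
    have ha : a != 0 by rewrite gt_eqF.
    by field.
  by apply: ler_pM; rewrite ?normr_ge0.
have T2 : `|(Dp - Dm) / bb| <= B1 / a.
  rewrite normrM [`|bb^-1|]ger0_norm; last by rewrite invr_ge0 ltW.
  have bi0 : 0 <= bb^-1 by rewrite invr_ge0 ltW.
  exact: ler_pM.
apply: (le_trans (ler_normB _ _)).
have M1 : B1 / a <= Num.max (B1 / a) (Lr / a * (B2 / a)) by rewrite le_max lexx.
have M2 : Lr / a * (B2 / a) <= Num.max (B1 / a) (Lr / a * (B2 / a)).
  by rewrite le_max lexx orbT.
lra.
Qed.

Section Main.
Variables (R : realType) (S : countType) (P : S -> S -> R) (z : S) (A : seq S).
Hypothesis P0 : forall x y, 0 <= P x y.
Hypothesis P1 : forall x, (\esum_(y in [set: S]) (P x y)%:E = 1)%E.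
Hypothesis uA : uniq A.
Hypothesis zA : z \in A.

Local Notation tb := (taboo P z).
Local Notation kl := (killed P A z).

Lemma Aprime_mem y : (y \in Aprime A z) = (y != z) && (y \in A).
Proof. by rewrite /Aprime mem_filter. Qed.

Lemma tb_ge0 n y : (0 <= tb n y)%E.
Proof.
elim: n y => [|n IH] y /=; first by rewrite lee_fin ler0n.
case: ifP => // _; apply: esum_ge0 => w _; apply: mule_ge0 => //.
by rewrite lee_fin.
Qed.

Lemma kl_ge0 n y : 0 <= kl n y.
Proof.
elim: n y => [|n IH] y /=; first by rewrite ler0n.
by apply: mulr_ge0; [rewrite ler0n| apply: sumr_ge0 => x _; apply: mulr_ge0].
Qed.

Lemma kl_out n y : y \notin A -> kl n y = 0.
Proof.
case: n => [|n] /= yA.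
  by case: eqP => // yz; move: yA; rewrite yz zA.
by rewrite Aprime_mem (negbTE yA) andbF mul0r.
Qed.

Lemma kl_z n : kl n.+1 z = 0.
Proof. by rewrite /= Aprime_mem eqxx mul0r. Qed.

Fixpoint rho n y : \bar R := match n with
  | 0 => 0%E
  | n.+1 => if y == z then 0%E else
      (\esum_(w in [set: S]) (rho n w * (P w y)%:E) +
       ((y \notin A)%:R * \sum_(x <- A) kl n x * P x y)%:E)%E
  end.

Lemma rho_ge0 n y : (0 <= rho n y)%E.
Proof.
elim: n y => [|n IH] y //=; case: ifP => // _; apply: adde_ge0.
  by apply: esum_ge0 => w _; apply: mule_ge0 => //; rewrite lee_fin.
rewrite lee_fin; apply: mulr_ge0; first by rewrite ler0n.
by apply: sumr_ge0 => x _; apply: mulr_ge0 => //; apply: kl_ge0.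
Qed.

Lemma rho_z n : rho n z = 0%E.
Proof. by case: n => //= n; rewrite eqxx. Qed.

Lemma esum_kl n (F : S -> R) : (forall x, 0 <= F x) ->
  (\esum_(w in [set: S]) (kl n w * F w)%:E = (\sum_(x <- A) kl n x * F x)%:E)%E.
Proof.
move=> F0; rewrite (esum_seqsupp uA) ?sumEFin// => x.
  by move=> xA; rewrite kl_out// mul0r.
by rewrite lee_fin mulr_ge0// kl_ge0.
Qed.

Lemma tb_split n y : tb n y = ((kl n y)%:E + rho n y)%E.
Proof.
elim: n y => [|n IH] y /=; first by rewrite adde0.
case: eqP => [->|/eqP yz]; first by rewrite Aprime_mem eqxx mul0r adde0.
under eq_esum => w _ do rewrite IH ge0_muleDl ?rho_ge0 ?lee_fin ?kl_ge0//.
rewrite esumD; last 2 first.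
- by move=> w _; rewrite mule_ge0 ?lee_fin ?kl_ge0.
- by move=> w _; rewrite mule_ge0 ?rho_ge0 ?lee_fin.
under eq_esum => w _ do rewrite -EFinM.
rewrite esum_kl// Aprime_mem yz /=.
case: (y \in A) => /=; rewrite ?mul1r ?mul0r ?adde0 ?add0e//.
by rewrite addeC.
Qed.


Section Lyap.
Variables (g rr h : S -> R).
Hypothesis g0 : forall x, x != z -> 0 <= g x.
Hypothesis rr0 : forall x, 0 <= rr x.
Hypothesis Hg : forall x, x != z ->
  (\esum_(y in [set y | y != z]) (P x y * g y)%:E <= (g x - rr x)%:E)%E.
Hypothesis Hh : forall x, x \in A ->
  (\esum_(y in [set y | y \notin A]) (P x y * g y)%:E <= (h x)%:E)%E.

Lemma gr0 x : x != z -> 0 <= g x - rr x.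
Proof.
move=> xz; rewrite -lee_fin (le_trans _ (Hg xz))// esum_ge0// => y /= yz.
by rewrite lee_fin mulr_ge0// g0.
Qed.

Lemma rhog0 n y : (0 <= rho n y * (g y)%:E)%E.
Proof.
case: (eqVneq y z) => [->|yz]; first by rewrite rho_z mul0e.
by rewrite mule_ge0 ?rho_ge0// lee_fin g0.
Qed.

Lemma lyap_step N :
  (\esum_(y in [set: S]) (rho N.+1 y * (g y)%:E) +
   \esum_(y in [set: S]) (rho N y * (rr y)%:E) <=
   \esum_(y in [set: S]) (rho N y * (g y)%:E) +
   (\sum_(x <- A) kl N x * h x)%:E)%E.
Proof.
set T1 := fun y => if y == z then 0%E else
  ((\esum_(w in [set: S]) (rho N w * (P w y)%:E)) * (g y)%:E)%E.
set T2 := fun y => (((y \notin A)%:R * \sum_(x <- A) kl N x * P x y) * g y)%:E.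
have T10 y : (0 <= T1 y)%E.
  rewrite /T1; case: eqP => // /eqP yz; rewrite mule_ge0 ?lee_fin ?g0//.
  by apply: esum_ge0 => w _; rewrite mule_ge0 ?rho_ge0 ?lee_fin.
have T20 y : (0 <= T2 y)%E.
  rewrite /T2 lee_fin; case yA: (y \in A); first by rewrite /= mul0r mul0r.
  rewrite /= mul1r mulr_ge0 ?g0//; last by apply/eqP => yz; rewrite yz zA in yA.
  by apply: sumr_ge0 => x _; rewrite mulr_ge0 ?kl_ge0.
have E12 : (\esum_(y in [set: S]) (rho N.+1 y * (g y)%:E) =
    \esum_(y in [set: S]) T1 y + \esum_(y in [set: S]) T2 y)%E.
  rewrite -esumD//; apply: eq_esum => y _ /=; rewrite /T1 /T2.
  case: eqP => [->|/eqP yz]; first by rewrite zA /= mul0e !mul0r add0e.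
  rewrite ge0_muleDl -?EFinM//.
    by apply: esum_ge0 => w _; rewrite mule_ge0 ?rho_ge0 ?lee_fin.
  rewrite lee_fin mulr_ge0 ?ler0n//.
  by apply: sumr_ge0 => x _; rewrite mulr_ge0 ?kl_ge0.
have B2 : (\esum_(y in [set: S]) T2 y <= (\sum_(x <- A) kl N x * h x)%:E)%E.
  have -> : T2 = fun y => (\sum_(x <- A) (kl N x)%:E *
      (if y \in [set y | y \notin A] then (P x y * g y)%:E else 0))%E.
    apply: funext => y; rewrite /T2 in_setb; case yA: (y \in A) => /=.
      by rewrite !mul0r big1// => x _; rewrite mule0.
    rewrite mul1r big_distrl -sumEFin; apply: eq_bigr => x _.
    by rewrite -EFinM mulrA.
  rewrite esum_sum; last first.
    move=> y x _ _; rewrite mule_ge0 ?lee_fin ?kl_ge0//; case: ifP => //.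
    rewrite in_setb => yA; rewrite lee_fin mulr_ge0 ?g0//.
    by apply/eqP => yz; rewrite yz zA in yA.
  rewrite -sumEFin big_seq [X in (_ <= X)%E]big_seq; apply: lee_sum => x xA.
  rewrite esumZl ?lee_fin ?kl_ge0//; last first.
    move=> y _; case: ifP => //; rewrite in_setb => yA; rewrite lee_fin mulr_ge0 ?g0//.
    by apply/eqP => yz; rewrite yz zA in yA.
  rewrite -esum_mkcond EFinM lee_wpmul2l ?lee_fin ?kl_ge0//.
  exact: Hh.
have B1 : (\esum_(y in [set: S]) T1 y <=
    \esum_(w in [set: S]) (rho N w * (g w - rr w)%:E))%E.
  have -> : (\esum_(y in [set: S]) T1 y = \esum_(y in [set: S])
      \esum_(w in [set: S]) (if y == z then 0 else rho N w * (P w y * g y)%:E))%E.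
    apply: eq_esum => y _; rewrite /T1; case: eqP => [_|/eqP yz].
      by rewrite esum1.
    rewrite -esumZr ?lee_fin ?g0//; last first.
      by move=> w _; rewrite mule_ge0 ?rho_ge0 ?lee_fin.
    by apply: eq_esum => w _; rewrite -muleA -EFinM.
  rewrite esum_swap; last first.
    move=> y w _ _; case: eqP => // /eqP yz.
    by rewrite mule_ge0 ?rho_ge0 ?lee_fin ?mulr_ge0 ?g0.
  apply: le_esum => w _.
  case: (eqVneq w z) => [->|wz].
    by rewrite rho_z mul0e esum1// => y _; case: ifP => //; rewrite mul0e.
  rewrite (eq_esum (b := fun y => rho N w *
      (if y \in [set y | y != z] then (P w y * g y)%:E else 0))%E); last first.
    by move=> y _; rewrite in_setb; case: eqP => //=; rewrite mule0.
  rewrite esumZl ?rho_ge0//; last first.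
    move=> y _; case: ifP => //; rewrite in_setb => yz.
    by rewrite lee_fin mulr_ge0 ?g0.
  by rewrite -esum_mkcond lee_wpmul2l ?rho_ge0// Hg.
have C : (\esum_(w in [set: S]) (rho N w * (g w - rr w)%:E) +
   \esum_(y in [set: S]) (rho N y * (rr y)%:E) =
   \esum_(y in [set: S]) (rho N y * (g y)%:E))%E.
  rewrite -esumD; last 2 first.
  - move=> w _; case: (eqVneq w z) => [->|wz]; first by rewrite rho_z mul0e.
    by rewrite mule_ge0 ?rho_ge0 ?lee_fin ?gr0.
  - by move=> w _; rewrite mule_ge0 ?rho_ge0 ?lee_fin.
  apply: eq_esum => w _.
  case: (eqVneq w z) => [->|wz]; first by rewrite rho_z !mul0e adde0.
  by rewrite -ge0_muleDr ?lee_fin ?gr0// -EFinD subrK.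
rewrite E12 -C; apply: (le_trans (leeD (leeD B1 B2) (lexx _))).
by rewrite addeAC.
Qed.


Hypothesis h0 : forall x, x \in A -> 0 <= h x.

Lemma lyap_sum N :
  (\sum_(0 <= n < N) \esum_(y in [set: S]) (rho n y * (rr y)%:E) +
   \esum_(y in [set: S]) (rho N y * (g y)%:E) <=
   (\sum_(0 <= n < N) \sum_(x <- A) kl n x * h x)%:E)%E.
Proof.
elim: N => [|N IH].
  by rewrite !big_geq// add0e esum1// => y _; rewrite mul0e.
rewrite !big_nat_recr//= EFinD -addeA (addeC (esum _ _)).
apply: (le_trans (leeD (lexx _) (lyap_step N))).
by rewrite addeA leeD.
Qed.

Lemma lyap_D :
  (\sum_(n <oo) \esum_(y in [set: S]) (rho n y * (rr y)%:E) <=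
   \sum_(n <oo) (\sum_(x <- A) kl n x * h x)%:E)%E.
Proof.
apply: nneseries_le_partial.
- by move=> n; apply: esum_ge0 => y _; rewrite mule_ge0 ?rho_ge0 ?lee_fin.
- move=> n; rewrite lee_fin big_seq; apply: sumr_ge0 => x xA.
  by rewrite mulr_ge0 ?kl_ge0 ?h0.
move=> N; rewrite sumEFin; apply: le_trans (lyap_sum N).
rewrite leeDl// esum_ge0// => y _; exact: rhog0.
Qed.

End Lyap.


Definition nu y : \bar R := (\sum_(n <oo) tb n y)%E.
Definition mm n : \bar R := (\esum_(y in [set: S]) tb n y)%E.

Lemma nu_ge0 y : (0 <= nu y)%E.
Proof. by apply: nneseries_ge0 => n _ _; exact: tb_ge0. Qed.

Lemma tbS n y : y != z ->
  tb n.+1 y = (\esum_(w in [set: S]) (tb n w * (P w y)%:E))%E.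
Proof. by move=> yz /=; rewrite (negbTE yz). Qed.

Lemma tbSz n : tb n.+1 z = 0%E.
Proof. by rewrite /= eqxx. Qed.

Lemma nu_z : nu z = 1%E.
Proof.
rewrite /nu nneseries_recl//; last by move=> k _; exact: tb_ge0.
rewrite eseries0 ?adde0 /=; first by rewrite eqxx.
by move=> [|i] // _ _; rewrite tbSz.
Qed.

Lemma nuP_exchange y :
  (\esum_(w in [set: S]) (nu w * (P w y)%:E) =
   \sum_(n <oo) \esum_(w in [set: S]) (tb n w * (P w y)%:E))%E.
Proof.
have tP0 n w : (0 <= tb n w * (P w y)%:E)%E by rewrite mule_ge0 ?tb_ge0 ?lee_fin.
rewrite nneseries_esumT; last by move=> n; exact: esum_ge0.
rewrite esum_swap//; apply: eq_esum => w _.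
rewrite /nu -nneseries_esumT// muleC -nneseriesZl; last by move=> n _; exact: tb_ge0.
by apply: eq_eseriesr => n _; rewrite muleC.
Qed.

Lemma nuP_neq y : y != z ->
  (\esum_(w in [set: S]) (nu w * (P w y)%:E))%E = nu y.
Proof.
move=> yz; rewrite nuP_exchange /nu [in RHS]nneseries_recl//; last first.
  by move=> k _; exact: tb_ge0.
rewrite /= (negbTE yz) add0e -(@nneseries_addn _ (fun k => tb k y) 1%N); last first.
  by move=> n; exact: tb_ge0.
by apply: eq_eseriesr => n _; rewrite addn1 tbS.
Qed.

Lemma mm_ge0 n : (0 <= mm n)%E.
Proof. by apply: esum_ge0 => y _; exact: tb_ge0. Qed.

Lemma mm0 : mm 0 = 1%E.
Proof.
rewrite /mm (esum_seqsupp (s := [:: z]))//=.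
- by rewrite big_seq1 eqxx.
- by move=> x; rewrite inE => /negbTE ->.
Qed.

Lemma esum_split_z (F : S -> \bar R) : (forall y, 0 <= F y)%E ->
  (\esum_(y in [set: S]) F y = F z + \esum_(y in [set~ z]) F y)%E.
Proof.
move=> F0; rewrite (esumID [set z])// !setTI esum_set1//.
Qed.

Definition dd n : \bar R := (\esum_(w in [set: S]) (tb n w * (P w z)%:E))%E.

Lemma dd_ge0 n : (0 <= dd n)%E.
Proof. by apply: esum_ge0 => w _; rewrite mule_ge0 ?tb_ge0 ?lee_fin. Qed.

Definition Gn n y : \bar R := (\esum_(w in [set: S]) (tb n w * (P w y)%:E))%E.

Lemma Gn_ge0 n y : (0 <= Gn n y)%E.
Proof. by apply: esum_ge0 => w _; rewrite mule_ge0 ?tb_ge0 ?lee_fin. Qed.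

Lemma mm_Gn n : mm n = (\esum_(y in [set: S]) Gn n y)%E.
Proof.
rewrite /Gn esum_swap; last by move=> *; rewrite mule_ge0 ?tb_ge0 ?lee_fin.
rewrite /mm; apply: eq_esum => w _.
by rewrite esumZl ?tb_ge0 ?P1 ?mule1// => y _; rewrite lee_fin.
Qed.

Lemma mm_step n : (dd n + mm n.+1 = mm n)%E.
Proof.
rewrite [RHS]mm_Gn /mm (esum_split_z (tb_ge0 n.+1)).
rewrite (esum_split_z (Gn_ge0 n)).
rewrite tbSz add0e; congr (_ + _)%E.
apply: eq_esum => y yz; rewrite tbS//; exact/eqP.
Qed.


Lemma dd_partial N : (\sum_(0 <= n < N) dd n + mm N = 1)%E.
Proof.
elim: N => [|N IH]; first by rewrite big_geq// add0e mm0.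
by rewrite big_nat_recr//= -addeA mm_step.
Qed.


Hypothesis prec : (mean_return_time P z < +oo)%E.

Lemma dd_sum : (1 <= \sum_(n <oo) dd n)%E.
Proof.
have s0 : (0 <= \sum_(n <oo) dd n)%E by apply: nneseries_ge0 => n _ _; exact: dd_ge0.
rewrite leNgt; apply/negP => slt.
have sfin : (\sum_(n <oo) dd n)%E \is a fin_num.
  by rewrite ge0_fin_numE// (lt_trans slt)// ltry.
set ss := fine (\sum_(n <oo) dd n)%E.
have sE : (\sum_(n <oo) dd n)%E = ss%:E by rewrite /ss fineK.
have ss1 : ss < 1 by rewrite -lte_fin -sE.
set e := 1 - ss.
have e0 : 0 < e by rewrite /e subr_gt0.
have mmN N : (e%:E <= mm N)%E.
  have mmfin : mm N \is a fin_num.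
    rewrite ge0_fin_numE ?mm_ge0// (le_lt_trans _ (ltry 1))//.
    by rewrite -(dd_partial N) leeDr// sume_ge0// => n _; exact: dd_ge0.
  have H : (1 <= ss%:E + mm N)%E.
    rewrite -(dd_partial N) leeD// -sE.
    by apply: nneseries_lim_ge => n _ _; exact: dd_ge0.
  rewrite -(fineK mmfin) lee_fin; rewrite -(fineK mmfin) -EFinD lee_fin in H.
  by rewrite /e lerBlDl.
have Nb N : ((N%:R * e)%:E <= \sum_(0 <= n < N) mm n)%E.
  elim: N => [|N IH]; first by rewrite big_geq// mul0r.
  by rewrite big_nat_recr//= -nat1r mulrDl mul1r addrC EFinD leeD.
have b0 : (0 <= mean_return_time P z)%E.
  by apply: nneseries_ge0 => n _ _; exact: mm_ge0.
have bfin : mean_return_time P z \is a fin_num by rewrite ge0_fin_numE.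
set bb := fine (mean_return_time P z).
have bE : mean_return_time P z = bb%:E by rewrite /bb fineK.
set N0 := (Num.truncn (bb / e)).+1.
have H1 := Nb N0.
have H2 : (\sum_(0 <= n < N0) mm n <= bb%:E)%E.
  by rewrite -bE; apply: nneseries_lim_ge => n _ _; exact: mm_ge0.
have H3 : N0%:R * e <= bb by rewrite -lee_fin (le_trans H1 H2).
have H4 : bb / e < N0%:R by apply: truncnS_gt.
by move: H4; rewrite ltr_pdivrMr// ltNge H3.
Qed.


Lemma nuP_ge y : (nu y <= \esum_(w in [set: S]) (nu w * (P w y)%:E))%E.
Proof.
case: (eqVneq y z) => [->|yz]; last by rewrite nuP_neq.
by rewrite nu_z nuP_exchange; exact: dd_sum.
Qed.

Lemma esum_nu : (\esum_(y in [set: S]) nu y = mean_return_time P z)%E.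
Proof.
rewrite /mean_return_time nneseries_esumT; last by move=> n; exact: mm_ge0.
rewrite -esum_swap; last by move=> *; exact: tb_ge0.
by apply: eq_esum => y _; rewrite /nu nneseries_esumT//; move=> n; exact: tb_ge0.
Qed.


Lemma sum_splitA (V : Type) (idx : V) (op : Monoid.com_law idx) (F : S -> V) :
  \big[op/idx]_(x <- A) F x = op (F z) (\big[op/idx]_(x <- Aprime A z) F x).
Proof. by rewrite (bigD1_seq z)// /Aprime big_filter. Qed.

Definition lam x : \bar R := (\sum_(n <oo) (kl n x)%:E)%E.

Lemma lam_ge0 x : (0 <= lam x)%E.
Proof. by apply: nneseries_ge0 => n _ _; rewrite lee_fin kl_ge0. Qed.

Lemma lam_z : lam z = 1%E.
Proof.
rewrite /lam nneseries_recl//; last by move=> k _; rewrite lee_fin kl_ge0.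
rewrite eseries0 ?adde0 /=; first by rewrite eqxx.
by move=> [|i] // _ _; rewrite kl_z.
Qed.

Lemma kappa_lam (f : S -> R) : (forall x, x \in A -> 0 <= f x) ->
  kappa P A z f = (\sum_(x <- A) (f x)%:E * lam x)%E.
Proof.
move=> f0; rewrite /kappa.
rewrite (eq_eseriesr (g := fun j => \sum_(x <- A | x \in A) (kl j x * f x)%:E)%E); last first.
  by move=> j _; rewrite -big_seq sumEFin.
rewrite nneseries_sum; last by move=> x j xA; rewrite lee_fin mulr_ge0 ?kl_ge0 ?f0.
rewrite big_seq; apply: eq_bigr => x xA.
rewrite /lam -nneseriesZl; last by move=> n _; rewrite lee_fin kl_ge0.
by apply: eq_eseriesr => n _; rewrite -EFinM mulrC.
Qed.

Lemma nu_split (f : S -> R) : (forall x, 0 <= f x) ->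
  (\esum_(y in [set: S]) (nu y * (f y)%:E) = kappa P A z f +
   \sum_(n <oo) \esum_(y in [set: S]) (rho n y * (f y)%:E))%E.
Proof.
move=> f0.
have -> : (\esum_(y in [set: S]) (nu y * (f y)%:E) =
    \sum_(n <oo) \esum_(y in [set: S]) (tb n y * (f y)%:E))%E.
  rewrite nneseries_esumT; last first.
    by move=> n; apply: esum_ge0 => y _; rewrite mule_ge0 ?tb_ge0 ?lee_fin.
  rewrite esum_swap; last by move=> *; rewrite mule_ge0 ?tb_ge0 ?lee_fin.
  apply: eq_esum => y _; rewrite /nu muleC -nneseriesZl; last first.
    by move=> n _; exact: tb_ge0.
  rewrite nneseries_esumT//; last by move=> n; rewrite mule_ge0 ?tb_ge0 ?lee_fin.
  by apply: eq_esum => n _; rewrite muleC.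
rewrite /kappa -nneseriesD; last 2 first.
- by move=> n _ _; rewrite lee_fin big_seq sumr_ge0// => x _; rewrite mulr_ge0 ?kl_ge0.
- by move=> n _ _; apply: esum_ge0 => y _; rewrite mule_ge0 ?rho_ge0 ?lee_fin.
apply: eq_eseriesr => n _.
rewrite -esum_kl// -esumD; last 2 first.
- by move=> y _; rewrite lee_fin mulr_ge0 ?kl_ge0.
- by move=> y _; rewrite mule_ge0 ?rho_ge0 ?lee_fin.
apply: eq_esum => y _; rewrite tb_split ge0_muleDl ?lee_fin ?kl_ge0 ?rho_ge0// EFinM.
Qed.


Lemma lam_rec y : y \in Aprime A z ->
  lam y = ((P z y)%:E + \sum_(x <- Aprime A z) lam x * (P x y)%:E)%E.
Proof.
move=> yA'; have yz : y != z by move: yA'; rewrite Aprime_mem => /andP[].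
rewrite /lam nneseries_recl//; last by move=> k _; rewrite lee_fin kl_ge0.
rewrite [kl 0 y]/= (negbTE yz) add0e -(@nneseries_addn _ (fun k => (kl k y)%:E) 1%N); last first.
  by move=> n; rewrite lee_fin kl_ge0.
rewrite (eq_eseriesr (g := fun n => \sum_(x <- A) (kl n x * P x y)%:E)%E); last first.
  by move=> n _; rewrite addn1 /= yA' mul1r sumEFin.
rewrite nneseries_sum; last by move=> x j _; rewrite lee_fin mulr_ge0 ?kl_ge0.
rewrite (eq_bigr (fun x => lam x * (P x y)%:E)%E) => [|x _]; last first.
  rewrite /lam muleC -nneseriesZl; last by move=> n _; rewrite lee_fin kl_ge0.
  by apply: eq_eseriesr => n _; rewrite -EFinM mulrC.
by rewrite sum_splitA lam_z mul1e.
Qed.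


Definition Dr (f : S -> R) : \bar R :=
  (\sum_(n <oo) \esum_(y in [set: S]) (rho n y * (f y)%:E))%E.

Lemma Dr_ge0 f : (forall x, 0 <= f x) -> (0 <= Dr f)%E.
Proof.
move=> f0; apply: nneseries_ge0 => n _ _; apply: esum_ge0 => y _.
by rewrite mule_ge0 ?rho_ge0 ?lee_fin.
Qed.

Lemma b_split : mean_return_time P z = (kappa P A z (fun=> 1%R) + Dr (fun=> 1%R))%E.
Proof.
rewrite -esum_nu -nu_split// ; apply: eq_esum => y _; by rewrite mule1.
Qed.

Lemma kappa1_lam : kappa P A z (fun=> 1%R) = (\sum_(x <- A) lam x)%E.
Proof. by rewrite kappa_lam//; apply: eq_bigr => x _; rewrite mul1e. Qed.

Lemma kappa1_fin : kappa P A z (fun=> 1%R) \is a fin_num.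
Proof.
have k0 : (0 <= kappa P A z (fun=> 1%R))%E.
  by rewrite kappa1_lam sume_ge0// => x _; exact: lam_ge0.
rewrite ge0_fin_numE// (le_lt_trans _ prec)// b_split leeDl// Dr_ge0 // => ?; exact: ler01.
Qed.

Lemma lam_fin x : x \in A -> lam x \is a fin_num.
Proof.
move=> xA; rewrite ge0_fin_numE ?lam_ge0//.
have := kappa1_fin; rewrite ge0_fin_numE; last first.
  by rewrite kappa1_lam sume_ge0// => y _; exact: lam_ge0.
apply: le_lt_trans; rewrite kappa1_lam (bigD1_seq x)//= leeDl//.
by rewrite sume_ge0// => y _; exact: lam_ge0.
Qed.

Definition lr x := fine (lam x).

Lemma lrE x : x \in A -> (lr x)%:E = lam x.
Proof. by move=> xA; rewrite /lr fineK// lam_fin. Qed.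

Lemma lr_ge0 x : 0 <= lr x.
Proof. by rewrite /lr fine_ge0// lam_ge0. Qed.

Lemma lr_z : lr z = 1.
Proof. by rewrite /lr lam_z. Qed.

Lemma kappa_fine (f : S -> R) : (forall x, x \in A -> 0 <= f x) ->
  kappa P A z f = (\sum_(x <- A) f x * lr x)%:E.
Proof.
move=> f0; rewrite kappa_lam// -sumEFin big_seq [in RHS]big_seq.
by apply: eq_bigr => x xA; rewrite EFinM lrE.
Qed.


Lemma lr_rec y : y \in Aprime A z ->
  lr y = P z y + \sum_(x <- Aprime A z) lr x * P x y.
Proof.
move=> yA'; have yA : y \in A by move: yA'; rewrite Aprime_mem => /andP[].
apply/eqP; rewrite -eqe; apply/eqP.
rewrite lrE// lam_rec// EFinD -sumEFin; congr (_ + _)%E.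
rewrite big_seq [in RHS]big_seq; apply: eq_bigr => x xA'.
have xA : x \in A by move: xA'; rewrite Aprime_mem => /andP[].
by rewrite EFinM lrE.
Qed.

Lemma seq_ord (F : S -> R) :
  \sum_(x <- Aprime A z) F x = \sum_(i < size (Aprime A z)) F (nth z (Aprime A z) i).
Proof. by rewrite (big_nth z) big_mkord. Qed.

Definition wrow : 'rV[R]_(size (Aprime A z)) := \row_i lr (nth z (Aprime A z) i).

Lemma w_eq : wrow *m (1%:M - P22 P A z) = P12 P A z.
Proof.
rewrite mulmxBr mulmx1; apply/rowP => j; rewrite !mxE.
under eq_bigr do rewrite !mxE.
rewrite (lr_rec (mem_nth _ (ltn_ord j))) seq_ord.
by rewrite addrK.
Qed.

Hypothesis Hunit : (1%:M - P22 P A z) \in unitmx.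

Lemma wP : P12 P A z *m invmx (1%:M - P22 P A z) = wrow.
Proof. by rewrite -w_eq mulmxK. Qed.

Lemma beta_eq h : (forall x, x \in A -> 0 <= h x) ->
  kappa P A z h = (beta P A z h)%:E.
Proof.
move=> h0; rewrite kappa_fine// sum_splitA lr_z mulr1 /beta wP.
congr (_ + _)%:E; rewrite !mxE seq_ord; apply: eq_bigr => i _.
by rewrite !mxE mulrC.
Qed.


Lemma Dr_le (f g : S -> R) : (forall x, 0 <= f x) -> (forall x, f x <= g x) ->
  (Dr f <= Dr g)%E.
Proof.
move=> f0 fg; apply: lee_nneseries.
  by move=> n _ _; apply: esum_ge0 => y _; rewrite mule_ge0 ?rho_ge0 ?lee_fin.
by move=> n _; apply: le_esum => y _; rewrite lee_wpmul2l ?rho_ge0 ?lee_fin.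
Qed.

Lemma Dr_add (f g : S -> R) : (forall x, 0 <= f x) -> (forall x, 0 <= g x) ->
  Dr (fun x => f x + g x) = (Dr f + Dr g)%E.
Proof.
move=> f0 g0; rewrite /Dr -nneseriesD; last 2 first.
- by move=> n _ _; apply: esum_ge0 => y _; rewrite mule_ge0 ?rho_ge0 ?lee_fin.
- by move=> n _ _; apply: esum_ge0 => y _; rewrite mule_ge0 ?rho_ge0 ?lee_fin.
apply: eq_eseriesr => n _; rewrite -esumD; last 2 first.
- by move=> y _; rewrite mule_ge0 ?rho_ge0 ?lee_fin.
- by move=> y _; rewrite mule_ge0 ?rho_ge0 ?lee_fin.
by apply: eq_esum => y _; rewrite EFinD ge0_muleDr ?lee_fin.
Qed.

Definition aa := fine (kappa P A z (fun=> 1%R)).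

Lemma aa_sum : aa = \sum_(x <- A) lr x.
Proof.
rewrite /aa kappa_fine; last by move=> *; exact: ler01.
by rewrite /=; under eq_bigr do rewrite mul1r.
Qed.

Lemma aa_ge1 : 1 <= aa.
Proof.
rewrite aa_sum sum_splitA lr_z lerDl sumr_ge0// => x _; exact: lr_ge0.
Qed.

Lemma pistar_val x : pistar P A z x = (if x \in A then lr x else 0) / aa.
Proof.
rewrite /pistar /pitilde -/aa kappa_fine//=.
congr (_ / _); case: ifPn => xA.
  rewrite (bigD1_seq x)//= eqxx mul1r big1 ?addr0// => y /negbTE ->.
  by rewrite mul0r.
rewrite big_seq big1// => y yA; case: eqP => [yx|]; last by rewrite mul0r.
by move: xA; rewrite -yx yA.
Qed.

Lemma pistar_esum (g : S -> R) : (forall x, 0 <= g x) ->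
  (\esum_(x in [set: S]) (pistar P A z x * g x)%:E =
   ((\sum_(x <- A) g x * lr x) / aa)%:E)%E.
Proof.
move=> g0; rewrite (esum_seqsupp uA).
- rewrite sumEFin mulr_suml big_seq [in RHS]big_seq; congr EFin.
  apply: eq_bigr => x xA; rewrite pistar_val xA; field.
  by rewrite gt_eqF// (lt_le_trans ltr01 aa_ge1).
- by move=> x xA; rewrite pistar_val (negbTE xA) mul0r mul0r.
- move=> x; rewrite lee_fin mulr_ge0// pistar_val divr_ge0 ?lr_ge0//.
    by case: ifP => _; rewrite ?lr_ge0.
  by rewrite (le_trans ler01 aa_ge1).
Qed.

Lemma ssum_split (c f : S -> R) : (forall x, 0 <= c x) ->
  ssum (fun x => c x * f x) =
  (\esum_(x in [set: S]) (c x * Num.max (f x) 0)%:E -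
   \esum_(x in [set: S]) (c x * Num.max (- f x) 0)%:E)%E.
Proof.
move=> c0; rewrite /ssum; congr (_ - _)%E; apply: eq_esum => x _.
  by rewrite maxr_pMr// mulr0.
by rewrite -mulrN maxr_pMr// mulr0.
Qed.

Section Stat.
Variable pi : S -> R.
Hypothesis pi0 : forall x, 0 <= pi x.
Hypothesis pi1 : (\esum_(x in [set: S]) (pi x)%:E = 1)%E.
Hypothesis piS : forall y, (pi y)%:E = (\esum_(x in [set: S]) (pi x * P x y)%:E)%E.
Hypothesis irr : irreducible P.

Lemma chain (F : S -> R) : (forall x y, F x * P x y <= F y) ->
  forall x y, 0 < F x -> 0 < F y.
Proof.
move=> HF x y Fx; have [s /andP [ps /eqP ly]] := irr x y.
elim: s x Fx ps ly => [|a s IH] x Fx /=; first by move=> _ <-.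
move=> /andP [Pxa ps] ly; apply: (IH a) => //.
by apply: lt_le_trans (HF x a); exact: mulr_gt0.
Qed.

Lemma pi_step x y : pi x * P x y <= pi y.
Proof.
rewrite -lee_fin piS; apply: (esum_ge1 (a := fun w => (pi w * P w y)%:E)) => //.
by move=> w _; rewrite lee_fin mulr_ge0.
Qed.

Lemma piz_gt0 : 0 < pi z.
Proof.
have [[x px]|H] := pselect (exists x, 0 < pi x).
  exact: (chain pi_step z px).
have : (\esum_(x in [set: S]) (pi x)%:E = 0)%E.
  apply: esum1 => x _; congr EFin; apply/eqP; rewrite eq_le pi0 andbT leNgt.
  by apply/negP => px; apply: H; exists x.
by rewrite pi1 => /eqP; rewrite eqe oner_eq0.
Qed.

Lemma pi_nu_partial N y :
  ((pi z)%:E * \sum_(0 <= n < N) tb n y <= (pi y)%:E)%E.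
Proof.
elim: N y => [|N IH] y; first by rewrite big_geq// mule0 lee_fin.
case: (eqVneq y z) => [->|yz].
  rewrite big_nat_recl// (eq_bigr (fun=> 0%E)) => [|i _]; last exact: tbSz.
  by rewrite big1_eq adde0 /= eqxx mule1.
rewrite big_nat_recl// [tb 0 y]/= (negbTE yz) add0e.
rewrite (eq_bigr (fun i => \esum_(w in [set: S]) (tb i w * (P w y)%:E))%E); last first.
  by move=> i _; rewrite tbS.
rewrite -esum_sum; last by move=> w i _ _; rewrite mule_ge0 ?tb_ge0 ?lee_fin.
rewrite -esumZl ?lee_fin//; last first.
  by move=> w _; rewrite sume_ge0// => i _; rewrite mule_ge0 ?tb_ge0 ?lee_fin.
rewrite [X in (_ <= X)%E]piS; apply: le_esum => w _.
rewrite -ge0_sume_distrl; last by move=> i _; exact: tb_ge0.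
by rewrite muleA EFinM lee_wpmul2r ?lee_fin.
Qed.

Lemma pi_nu y : ((pi z)%:E * nu y <= (pi y)%:E)%E.
Proof.
rewrite /nu -nneseriesZl; last by move=> n _; exact: tb_ge0.
apply: nneseries_le_bound.
  by move=> n; rewrite mule_ge0 ?tb_ge0// lee_fin.
by move=> N; rewrite -ge0_sume_distrr ?pi_nu_partial// => n _; exact: tb_ge0.
Qed.

Lemma nu_fin y : nu y \is a fin_num.
Proof.
rewrite ge0_fin_numE ?nu_ge0// ltNge; apply/negP => H.
have := pi_nu y; rewrite (_ : nu y = +oo%E); last by apply/eqP; rewrite eq_le leey.
by rewrite muleC gt0_mulye ?lte_fin ?piz_gt0// leNgt ltry.
Qed.

Definition nr y := fine (nu y).
Definition mu y := pi y - pi z * nr y.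

Lemma nrE y : (nr y)%:E = nu y.
Proof. by rewrite /nr fineK// nu_fin. Qed.

Lemma mu_ge0 y : 0 <= mu y.
Proof. by rewrite /mu subr_ge0 -lee_fin EFinM nrE pi_nu. Qed.

Lemma mu_step x y : mu x * P x y <= mu y.
Proof.
have E : (pi y)%:E = (\esum_(w in [set: S]) (mu w * P w y)%:E +
    (pi z)%:E * \esum_(w in [set: S]) (nu w * (P w y)%:E))%E.
  rewrite -esumZl ?lee_fin//; last by move=> w _; rewrite mule_ge0 ?nu_ge0 ?lee_fin.
  rewrite -esumD; last 2 first.
  - by move=> w _; rewrite lee_fin mulr_ge0 ?mu_ge0.
  - by move=> w _; rewrite mule_ge0 ?lee_fin// mule_ge0 ?nu_ge0 ?lee_fin.
  rewrite piS; apply: eq_esum => w _.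
  by rewrite -nrE -!EFinM -EFinD /mu; congr EFin; ring.
have H : ((mu x * P x y)%:E + (pi z)%:E * nu y <= (pi y)%:E)%E.
  rewrite E leeD//.
    apply: (esum_ge1 (a := fun w => (mu w * P w y)%:E)) => //.
    by move=> w _; rewrite lee_fin mulr_ge0 ?mu_ge0.
  by rewrite lee_wpmul2l ?lee_fin// nuP_ge.
move: H; rewrite -nrE -EFinM -EFinD lee_fin /mu => H.
by rewrite lerBrDr.
Qed.

Lemma mu_z : mu z = 0.
Proof. by rewrite /mu /nr nu_z /= mulr1 subrr. Qed.

Lemma pi_eq x : pi x = pi z * nr x.
Proof.
have : mu x = 0.
  apply/eqP; rewrite eq_le mu_ge0 andbT leNgt; apply/negP => mx.
  by have := chain mu_step z mx; rewrite mu_z ltxx.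
by move/eqP; rewrite subr_eq0 => /eqP.
Qed.

Lemma b_eq : ((pi z)%:E * mean_return_time P z = 1)%E.
Proof.
rewrite -esum_nu -esumZl ?lee_fin//; last by move=> y _; exact: nu_ge0.
by rewrite -pi1; apply: eq_esum => y _; rewrite -nrE -EFinM -pi_eq.
Qed.


Lemma pi_esum (g : S -> R) : (forall x, 0 <= g x) ->
  (\esum_(x in [set: S]) (pi x * g x)%:E =
   (pi z)%:E * (kappa P A z g + Dr g))%E.
Proof.
move=> g0; rewrite -nu_split// -esumZl ?lee_fin//; last first.
  by move=> x _; rewrite mule_ge0 ?nu_ge0 ?lee_fin.
by apply: eq_esum => x _; rewrite pi_eq -nrE !EFinM muleA.
Qed.

Lemma main_bound (r g1 g2 h1 h2 : S -> R) :
  (forall x, 0 <= r x) ->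
  (forall x, x != z -> 0 <= g1 x) ->
  (forall x, x != z -> 0 <= g2 x) ->
  (forall x, x \in A -> 0 <= h1 x) ->
  (forall x, x \in A -> 0 <= h2 x) ->
  (forall x, x != z ->
     (\esum_(y in [set y | y != z]) (P x y * g1 y)%:E <= (g1 x - r x)%:E)%E) ->
  (forall x, x != z ->
     (\esum_(y in [set y | y != z]) (P x y * g2 y)%:E <= (g2 x - 1)%:E)%E) ->
  (forall x, x \in A ->
     (\esum_(y in [set y | y \notin A]) (P x y * g1 y)%:E <= (h1 x)%:E)%E) ->
  (forall x, x \in A ->
     (\esum_(y in [set y | y \notin A]) (P x y * g2 y)%:E <= (h2 x)%:E)%E) ->
  (rnorm (pistar P A z) pi r <=
    (2 * Num.max (beta P A z h1 / fine (kappa P A z (fun _ => 1)))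
                 (pitilde P A z r * (beta P A z h2 / fine (kappa P A z (fun _ => 1)))))%:E)%E.
Proof.
move=> r0 g10 g20 h10 h20 Hg1 Hg2 Hh1 Hh2.
rewrite -/aa.
have a0 : 0 < aa by rewrite (lt_le_trans ltr01 aa_ge1).
have one0 : forall x : S, (0:R) <= 1 by move=> x; exact: ler01.
have DrR : (Dr r <= (beta P A z h1)%:E)%E.
  by rewrite -beta_eq//; exact: (lyap_D g10 r0 Hg1 Hh1 h10).
have DrE : (Dr (fun=> 1%R) <= (beta P A z h2)%:E)%E.
  by rewrite -beta_eq//; exact: (lyap_D g20 one0 Hg2 Hh2 h20).
have b0 : (0 <= mean_return_time P z)%E.
  by apply: nneseries_ge0 => n _ _; exact: mm_ge0.
have bfin : mean_return_time P z \is a fin_num by rewrite ge0_fin_numE.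
have De_fin : Dr (fun=> 1%R) \is a fin_num.
  rewrite ge0_fin_numE ?Dr_ge0// (le_lt_trans _ prec)// b_split leeDr//.
  by rewrite kappa1_lam sume_ge0// => x _; exact: lam_ge0.
set De := fine (Dr (fun=> 1%R)).
have De0 : 0 <= De by rewrite /De fine_ge0// Dr_ge0.
have DeB : De <= beta P A z h2 by rewrite -lee_fin /De fineK.
have bE : mean_return_time P z = (aa + De)%:E.
  by rewrite b_split EFinD /aa /De !fineK// kappa1_fin.
have pz : pi z = (aa + De)^-1.
  have := b_eq; rewrite bE -EFinM => -[] H.
  have bb0 : aa + De != 0 by rewrite gt_eqF// ltr_wpDr.
  by rewrite -[pi z]mulr1 -(mulfV bb0) mulrA H mul1r.
have ptr : pitilde P A z r = (\sum_(x <- A) r x * lr x) / aa.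
  by rewrite /pitilde -/aa kappa_fine.
rewrite ptr.
apply: ge_ereal_sup => _ [f /= fr <-].
set fp := fun x => Num.max (f x) 0.
set fm := fun x => Num.max (- f x) 0.
have fp0 x : 0 <= fp x by rewrite /fp le_max lexx orbT.
have fm0 x : 0 <= fm x by rewrite /fm le_max lexx orbT.
have fpm x : fp x + fm x <= r x.
  have := fr x; rewrite /fp /fm /=; case: (lerP 0 (f x)) => fx.
    by rewrite max_r ?oppr_le0// addr0 ger0_norm.
  rewrite max_l; last by rewrite oppr_ge0 ltW.
  by rewrite add0r ltr0_norm.
have fpr x : fp x <= r x by apply: le_trans (fpm x); rewrite lerDl.
have fmr x : fm x <= r x by apply: le_trans (fpm x); rewrite lerDr.
have Dpm : (Dr fp + Dr fm <= (beta P A z h1)%:E)%E.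
  rewrite -Dr_add//; apply: le_trans DrR; apply: Dr_le => x; [exact: addr_ge0 | exact: fpm].
have Dp_fin : Dr fp \is a fin_num.
  rewrite ge0_fin_numE ?Dr_ge0// (le_lt_trans _ (ltry (beta P A z h1)))//.
  by apply: le_trans Dpm; rewrite leeDl ?Dr_ge0.
have Dm_fin : Dr fm \is a fin_num.
  rewrite ge0_fin_numE ?Dr_ge0// (le_lt_trans _ (ltry (beta P A z h1)))//.
  by apply: le_trans Dpm; rewrite leeDr ?Dr_ge0.
set Dp := fine (Dr fp).
set Dm := fine (Dr fm).
have DpE : Dr fp = Dp%:E by rewrite /Dp fineK.
have DmE : Dr fm = Dm%:E by rewrite /Dm fineK.
have pistar0 x : 0 <= pistar P A z x.
  rewrite pistar_val; apply: divr_ge0; last exact: ltW.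
  by case: ifP => _; rewrite ?lr_ge0.
rewrite (ssum_split _ pistar0) (ssum_split _ pi0) -/fp -/fm.
have fp0' : forall x, x \in A -> 0 <= fp x by move=> *; exact: fp0.
have fm0' : forall x, x \in A -> 0 <= fm x by move=> *; exact: fm0.
rewrite !pistar_esum// !pi_esum// !kappa_fine//.
rewrite DpE DmE -!EFinD.
rewrite abse_EFin lee_fin pz.
apply: final_ineq => //.
- by rewrite big_seq sumr_ge0// => x _; rewrite mulr_ge0 ?lr_ge0// le_max lexx orbT.
- by rewrite big_seq sumr_ge0// => x _; rewrite mulr_ge0 ?lr_ge0// le_max lexx orbT.
- rewrite -big_split /= big_seq [X in _ <= X]big_seq; apply: ler_sum => x _.
  by rewrite -mulrDl ler_wpM2r ?lr_ge0//; exact: fpm.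
- by rewrite /Dp fine_ge0// Dr_ge0.
- by rewrite /Dm fine_ge0// Dr_ge0.
- by rewrite -lee_fin EFinD -DpE -DmE.
Qed.

End Stat.

End Main.

Theorem theorem4p1 (R : realType) (S : countType)
  (P : S -> S -> R) (pi : S -> R) (z : S) (A : seq S)
  (r g1 g2 h1 h2 : S -> R) :
  stochastic P -> irreducible P -> positive_recurrent P ->
  stationary P pi ->
  uniq A -> z \in A ->
  (1%:M - P22 P A z) \in unitmx ->
  (forall x, 0 <= r x) ->
  (forall x, x != z -> 0 <= g1 x) ->
  (forall x, x != z -> 0 <= g2 x) ->
  (forall x, x \in A -> 0 <= h1 x) ->
  (forall x, x \in A -> 0 <= h2 x) ->
  (forall x, x != z ->
     (\esum_(y in [set y | y != z]) (P x y * g1 y)%:E <= (g1 x - r x)%:E)%E) ->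
  (forall x, x != z ->
     (\esum_(y in [set y | y != z]) (P x y * g2 y)%:E <= (g2 x - 1)%:E)%E) ->
  (forall x, x \in A ->
     (\esum_(y in [set y | y \notin A]) (P x y * g1 y)%:E <= (h1 x)%:E)%E) ->
  (forall x, x \in A ->
     (\esum_(y in [set y | y \notin A]) (P x y * g2 y)%:E <= (h2 x)%:E)%E) ->
  (rnorm (pistar P A z) pi r <=
    (2 * Num.max (beta P A z h1 / fine (kappa P A z (fun _ => 1)))
                 (pitilde P A z r * (beta P A z h2 / fine (kappa P A z (fun _ => 1)))))%:E)%E.
Proof.
move=> [P0 P1] irr prec [pi0 [pi1 piS]] uA zA Hunit r0 g10 g20 h10 h20 Hg1 Hg2 Hh1 Hh2.
have precz := prec z.

exact: (main_bound P0 P1 uA zA precz Hunit pi0 pi1 piS irr r0 g10 g20 h10 h20 Hg1 Hg2 Hh1 Hh2).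
Qed.
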